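(* Let $n$ be an odd prime and let $k_1,k_2\in\mathbb{Z}$ be such that $\sin\big(\frac{k_2\pi}{n}\big)\neq0$. Then $$\frac{\sin\big(\frac{k_1\pi}{n}\big)}{\sin\big(\frac{k_2\pi}{n}\big)}$$ is either $-1$, $0$, $1$, or irrational. *)

(* Defs.v *)
From Stdlib Require Import Reals ZArith Znumtheory.
Open Scope R_scope.

Definition is_rational (x : R) : Prop :=
  exists p q : Z, q <> 0%Z /\ x = IZR p / IZR q.

(* Main.v *)
Require Import Defs.
From Stdlib Require Import Reals ZArith Znumtheory Lia Lra Classical_Prop.
Open Scope R_scope.

Lemma sin_2piZ (x : R) (u : Z) : sin (x + 2 * IZR u * PI) = sin x.
Proof.
destruct (Z_le_gt_dec 0 u) as [Hu|Hu].
- rewrite <- (Z2Nat.id u Hu), <- INR_IZR_INZ. apply sin_period.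
- replace u with (- Z.of_nat (Z.to_nat (- u)))%Z by lia.
  rewrite opp_IZR, <- INR_IZR_INZ.
  set (y := x + 2 * - INR (Z.to_nat (- u)) * PI).
  rewrite <- (sin_period y (Z.to_nat (- u))). unfold y. f_equal. ring.
Qed.

Lemma sin_piZ (x : R) (t : Z) :
  sin (x + IZR t * PI) = sin x \/ sin (x + IZR t * PI) = - sin x.
Proof.
destruct (Zeven_odd_dec t) as [He|He];
  [apply Zeven_ex in He | apply Zodd_ex in He]; destruct He as [u Hu]; subst t.
- left. rewrite mult_IZR. now rewrite sin_2piZ.
- right. rewrite plus_IZR, mult_IZR.
  replace (x + (2 * IZR u + 1) * PI) with ((x + 2 * IZR u * PI) + PI) by ring.
  now rewrite neg_sin, sin_2piZ.
Qed.


Lemma F1 (s1 s2 P Q : R) : Q <> 0 -> s2 <> 0 -> s1 / s2 = P / Q -> Q * s1 = P * s2.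
Proof.
intros HQ Hs H.
assert (E : s1 = P / Q * s2) by (rewrite <- H; field; auto).
rewrite E. field. auto.
Qed.

Lemma F2 (s1 s2 : R) : s2 <> 0 -> s1 = s2 -> s1 / s2 = 1.
Proof. intros H ->. field. auto. Qed.

Lemma F3 (s1 s2 : R) : s2 <> 0 -> s1 = - s2 -> s1 / s2 = -1.
Proof. intros H ->. field. auto. Qed.

Definition theta (N : nat) : R := 2 * PI / INR N.

Lemma theta_N N : (0 < N)%nat -> INR N * theta N = 2 * PI.
Proof. intro H. unfold theta. field. apply not_0_INR. lia. Qed.

Lemma theta_sub N j : (0 < N)%nat -> (j <= N)%nat ->
  INR (N - j) * theta N = 2 * PI - INR j * theta N.
Proof.
intros H1 H2. rewrite minus_INR by lia. rewrite Rmult_minus_distr_r, theta_N; auto.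
Qed.

Lemma cos_2pi_minus x : cos (2 * PI - x) = cos x.
Proof. rewrite cos_minus, cos_2PI, sin_2PI. ring. Qed.

Lemma sin_2pi_minus x : sin (2 * PI - x) = - sin x.
Proof. rewrite sin_minus, cos_2PI, sin_2PI. ring. Qed.

Lemma sin_theta_pos N : (3 <= N)%nat -> 0 < sin (theta N).
Proof.
intro H. apply sin_gt_0; unfold theta.
- apply Rdiv_lt_0_compat. pose proof PI_RGT_0; lra. apply lt_0_INR; lia.
- apply Rlt_le_trans with (2 * PI / 2).
  + apply Rmult_lt_compat_l. pose proof PI_RGT_0; lra.
    apply Rinv_lt_contravar. apply Rmult_lt_0_compat. lra. apply lt_0_INR; lia.
    replace 2 with (INR 2) by (simpl; ring). apply lt_INR. lia.
  + right; field.
Qed.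

Lemma decomp (n k : Z) : (0 < n)%Z -> Z.odd n = true ->
  exists j : nat, (j < Z.to_nat n)%nat /\
   (sin (IZR k * PI / IZR n) = sin (INR j * theta (Z.to_nat n)) \/
    sin (IZR k * PI / IZR n) = - sin (INR j * theta (Z.to_nat n))).
Proof.
intros Hn Ho.
destruct (Z.odd_spec n) as [H _]. destruct (H Ho) as [u Hu].
set (h := (u + 1)%Z).
set (m := ((k * h) mod n)%Z).
assert (Hm := Z.mod_pos_bound (k * h) n Hn).
assert (Hd := Z.div_mod (k * h) n ltac:(lia)).
set (t := (2 * ((k * h) / n) - k)%Z).
assert (Hk : k = (2 * m + n * t)%Z) by (unfold t, m, h in *; nia).
exists (Z.to_nat m). split. lia.
assert (HN : INR (Z.to_nat n) = IZR n) by (rewrite INR_IZR_INZ; f_equal; lia).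
assert (Hj : INR (Z.to_nat m) = IZR m) by (rewrite INR_IZR_INZ; f_equal; lia).
assert (E : IZR k * PI / IZR n = INR (Z.to_nat m) * theta (Z.to_nat n) + IZR t * PI).
{ unfold theta. rewrite HN, Hj, Hk, plus_IZR, !mult_IZR. field.
  apply not_0_IZR. lia. }
rewrite E. apply sin_piZ.
Qed.

From mathcomp Require Import all_boot all_order all_algebra all_field.
Import Order.TTheory GRing.Theory Num.Theory.

Local Open Scope ring_scope.
From mathcomp Require Import Rstruct complex ring zify.
Set Implicit Arguments. Unset Strict Implicit. Unset Printing Implicit Defensive.
Local Open Scope ring_scope.
Definition Sp (p : nat) : {poly rat} := \poly_(i < p) 1.

Lemma size_Sp p : size (Sp p) = p.
Proof. by rewrite size_poly_eq // oner_eq0. Qed.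

Lemma Sp_monic p : (0 < p)%N -> Sp p \is monic.
Proof.
move=> p0; rewrite monicE /lead_coef size_Sp coef_poly.
by rewrite prednK // leqnn.
Qed.

Lemma horner_Sp (F : numFieldType) p (z : F) :
  (map_poly ratr (Sp p)).[z] = \sum_(i < p) z ^+ i.
Proof.
rewrite horner_coef size_map_poly size_Sp.
apply: eq_bigr => i _; rewrite coef_map coef_poly ltn_ord.
transitivity (1 * z ^+ i); last exact: mul1r.
congr (_ * _); exact: rmorph1.
Qed.

Lemma rootSp_pow (F : numFieldType) p (z : F) :
  root (map_poly ratr (Sp p)) z -> z ^+ p = 1.
Proof.
move=> /rootP; rewrite horner_Sp => h.
by apply/eqP; rewrite -subr_eq0 subrX1 h mulr0.
Qed.

Lemma rootSp_neq1 (F : numFieldType) p (z : F) : (0 < p)%N ->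
  root (map_poly ratr (Sp p)) z -> z != 1.
Proof.
move=> p0 /rootP; rewrite horner_Sp => h; apply/eqP => z1; move: h; rewrite z1.
apply/eqP; rewrite (eq_bigr (fun _ => 1)); last by move=> i _; rewrite expr1n.
by rewrite sumr_const card_ord pnatr_eq0 -lt0n.
Qed.

Lemma Sp_min (F : numFieldType) p (z : F) : prime p ->
  root (map_poly ratr (Sp p)) z ->
  forall q : {poly rat}, root (map_poly ratr q) z -> Sp p %| q.
Proof.
move=> pp rz q rq.
have p0 := prime_gt0 pp.
have [[u v] /eqpP[[c1 c2] /andP[c10 c20] /= E]] := Bezoutp (Sp p) q.
set g := gcdp (Sp p) q in E.
have gz : root (map_poly ratr g) z.
  have : root (map_poly ratr (c2 *: g)) z.
    rewrite -E linearZ /= rootE hornerZ rmorphD !rmorphM /= hornerD !hornerM.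
    by rewrite (rootP rz) (rootP rq) !mulr0 addr0 mulr0.
  by rewrite linearZ /= rootE hornerZ mulf_eq0 fmorph_eq0 (negbTE c20).
have gdv : g %| Sp p := dvdp_gcdl _ _.
have g0 : g != 0.
  apply: contraTneq gdv => ->; rewrite dvd0p -size_poly_eq0 size_Sp -lt0n //.
have sg : size (map_poly ratr g : {poly algC}) != 1%N.
  rewrite size_map_poly; apply/negP => /size_poly1P [c c0 gc].
  move: gz; rewrite gc map_polyC rootC /= fmorph_eq0; exact/negP.
have [w rw] := closed_rootP _ sg.
have rwS : root (map_poly ratr (Sp p)) w.
  by apply: root_dvdp rw; rewrite dvdp_map.
have wp := rootSp_pow rwS.
have w1 := rootSp_neq1 p0 rwS.
have [m pm mdv] := prim_order_exists p0 wp.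
have mp : m = p.
  have := pm; case/primeP: pp => _ /(_ m mdv) /orP[/eqP->|/eqP//].
  by move/prim_expr_order; rewrite expr1 => w1'; rewrite w1' eqxx in w1.
rewrite mp in pm.
have Dm := minCpoly_cyclotomic pm.
have [m0 [Dm0 mon0] min0] := minCpolyP w.
have m0g : m0 %| g by rewrite -min0.
have m0S : m0 %| Sp p by rewrite -min0.
have sm0 : size m0 = p.
  rewrite -(size_map_poly (@ratr algC)) -Dm0 Dm size_cyclotomic totient_prime //.
  by rewrite prednK.
have : m0 %= Sp p by rewrite -dvdp_size_eqp // sm0 size_Sp.
move=> /eqp_dvdl <-; exact: dvdp_trans m0g (dvdp_gcdr _ _).
Qed.
Local Open Scope complex_scope.
Lemma mulcc (a b c d : R) : (a +i* b) * (c +i* d) = (a * c - b * d) +i* (a * d + b * c).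
Proof. by []. Qed.

Lemma mulCc (x u v : R) : x%:C * (u +i* v) = (x * u) +i* (x * v).
Proof. rewrite mulcc; congr (_ +i* _); ring. Qed.

Lemma intC (a : int) : (a%:~R : R[i]) = (a%:~R : R)%:C.
Proof. by rewrite rmorph_int. Qed.

Definition zeta (N : nat) : R[i] := cos (theta N) +i* sin (theta N).

Lemma zetaX N k : zeta N ^+ k = cos (INR k * theta N) +i* sin (INR k * theta N).
Proof.
elim: k => [|k IH].
  by rewrite expr0 /= Rmult_0_l cos_0 sin_0.
rewrite exprSr IH /zeta mulcc S_INR Rmult_plus_distr_r Rmult_1_l cos_plus sin_plus.
congr (_ +i* _); rewrite ?RmultE ?RminusE ?RplusE; ring.
Qed.

Lemma subcc (a b c d : R) : (a +i* b) - (c +i* d) = (a - c) +i* (b - d).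
Proof. by []. Qed.

Lemma Sp_dvd_small p (q : {poly rat}) : (0 < p)%N -> Sp p %| q ->
  (size q <= p)%N -> q`_0 = 0 -> q = 0.
Proof.
move=> p0 /dvdpP [r ->] sq c0.
have [->|r0] := eqVneq r 0; first by rewrite mul0r.
have Sp0 : Sp p != 0 by rewrite -size_poly_eq0 size_Sp -lt0n.
move: sq; rewrite size_mul // size_Sp => sq.
have sr : (size r <= 1)%N. move: sq p0; rewrite -subn1; set s := size r; move=> H1 H2; lia.
move/size1_polyC: sr => Dr; rewrite Dr in c0 *.
by move: c0; rewrite coefCM coef_poly p0 mulr1 => ->; rewrite mul0r.
Qed.

Lemma size_le_add (p q : {poly rat}) N : (size p <= N)%N -> (size q <= N)%N ->
  (size (p + q)%R <= N)%N.
Proof. by move=> hp hq; apply: leq_trans (size_add _ _) _; rewrite geq_max hp. Qed.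

Lemma size_le_sub (p q : {poly rat}) N : (size p <= N)%N -> (size q <= N)%N ->
  (size (p - q)%R <= N)%N.
Proof. by move=> hp hq; apply: size_le_add => //; rewrite size_polyN. Qed.

Lemma size_le_scale (c : rat) (p : {poly rat}) N : (size p <= N)%N ->
  (size (c *: p) <= N)%N.
Proof. by move=> hp; apply: leq_trans (size_scale_leq _ _) hp. Qed.

Lemma size_le_CM (c : rat) (p : {poly rat}) N : (size p <= N)%N ->
  (size (c%:P * p)%R <= N)%N.
Proof. by move=> hp; rewrite mul_polyC; apply: leq_trans (size_scale_leq _ _) hp. Qed.

Lemma size_le_Xn k N : (k < N)%N -> (size ('X^k : {poly rat}) <= N)%N.
Proof. by rewrite size_polyXn. Qed.

Lemma K N (a b : int) (j1 j2 : nat) : prime N -> odd N ->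
  (0 < j1 < N)%N -> (0 < j2 < N)%N -> a != 0 ->
  (a%:~R : R) * sin (INR j1 * theta N) = b%:~R * sin (INR j2 * theta N) ->
  j2 = j1 \/ j2 = (N - j1)%N.
Proof.
move=> pN oN /andP[j1p j1N] /andP[j2p j2N] a0 Hab.
have N3 : (3 <= N)%N.
  have := prime_gt1 pN; case: N pN oN {j1N j2N Hab} => [|[|[|]]] //.
have N0 : (0 < N)%N by apply: leq_trans N3.
have N0' : (0 < N)%coq_nat by apply/ssrnat.ltP.
set z := zeta N.
have zN : z ^+ N = 1.
  by rewrite /z zetaX theta_N // cos_2PI sin_2PI.
have z1 : z != 1.
  apply/eqP => /(congr1 (fun c : R[i] => let: _ +i* y := c in y)) /=.
  have := sin_theta_pos N (ssrnat.leP N3); rewrite /theta => h e.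
  by rewrite e in h; move: h; move/Rlt_irrefl.
have rz : root (map_poly ratr (Sp N)) z.
  apply/rootP; rewrite horner_Sp.
  have : (z - 1) * \sum_(i < N) z ^+ i = 0 by rewrite -subrX1 zN subrr.
  by move/eqP; rewrite mulf_eq0 subr_eq0 (negbTE z1) /= => /eqP.
pose q : {poly rat} := (a%:~R)%:P * ('X^j1 - 'X^(N - j1)) - (b%:~R)%:P * ('X^j2 - 'X^(N - j2)).
have zsub j : (j <= N)%N -> z ^+ j - z ^+ (N - j) = 0 +i* (sin (INR j * theta N) *+ 2).
  move=> jN; rewrite /z !zetaX theta_sub //; last by apply/ssrnat.leP.
  rewrite cos_2pi_minus sin_2pi_minus subcc; congr (_ +i* _); first by rewrite subrr.
  by rewrite RoppE opprK mulr2n.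
have rq : root (map_poly ratr q) z.
rewrite /q rmorphB !rmorphM /= !map_polyC !rmorphB /= !map_polyXn rootE !hornerE.
  rewrite zsub ?(ltnW j1N) // zsub ?(ltnW j2N) //.
  rewrite !ratr_int !intC !mulCc subcc.
rewrite !mulr0 subrr !mulrnAr Hab subrr; exact/eqP.
have dq := Sp_min pN rz rq.
have q0 : q = 0.
  apply: Sp_dvd_small N0 dq _ _.
    apply: size_le_sub; apply: size_le_CM; apply: size_le_sub;
      apply: size_le_Xn; lia.
  rewrite /q coefB !coefCM !coefB !coefXn.
  have -> : (0 == j1)%N = false by apply/negbTE; rewrite eq_sym -lt0n.
  have -> : (0 == j2)%N = false by apply/negbTE; rewrite eq_sym -lt0n.
  have -> : (0 == N - j1)%N = false by apply/negbTE; rewrite eq_sym -lt0n subn_gt0.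
  have -> : (0 == N - j2)%N = false by apply/negbTE; rewrite eq_sym -lt0n subn_gt0.
  by rewrite !subrr !mulr0 subrr.
have := congr1 (fun p : {poly rat} => p`_j1) q0.
rewrite /q coefB !coefCM !coefB !coefXn coef0 eqxx.
have -> : (j1 == N - j1)%N = false.
  apply/negP => /eqP h; have : N = (j1 + j1)%N by lia.
  by move=> E; move: oN; rewrite E addnn odd_double.
case: (eqVneq j1 j2) => [-> _|ne12]; first by left.
case: (eqVneq j1 (N - j2)%N) => [e _|ne]; first by right; lia.
rewrite subr0 mulr1 !subrr mulr0 subr0 => /eqP; rewrite intr_eq0 (negbTE a0) //.
Qed.

Definition zint (z : Z) : int :=
  match z with Z0 => 0 | Zpos p => (Pos.to_nat p)%:Z | Zneg p => - (Pos.to_nat p)%:Z end.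

Lemma IZR_zint z : IZR z = (zint z)%:~R.
Proof.
case: z => [|p|p] //=.
  by rewrite /IZR -INR_IPR INRE.
rewrite /IZR -INR_IPR INRE RoppE mulrNz //.
Qed.

Lemma zint_neq0 (z : Z) : z <> Z0 -> zint z != 0.
Proof.
case: z => [//|p|p] _ /=; rewrite ?oppr_eq0 eqz_nat; apply/eqP; lia.
Qed.

Lemma prime_bridge (n : Z) : Znumtheory.prime n -> prime (Z.to_nat n).
Proof.
move=> Hp; have H2 := Znumtheory.prime_ge_2 _ Hp.
apply/primeP; split; first by apply/ssrnat.ltP; lia.
move=> d /dvdnP [k Hk].
have Hd : Z.divide (Z.of_nat d) n.
  exists (Z.of_nat k). have : Z.of_nat (Z.to_nat n) = Z.of_nat (k * d)%N by rewrite Hk.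
  rewrite Z2Nat.id; last lia. move=> ->. by rewrite -Nat2Z.inj_mul.
case: (Znumtheory.prime_divisors _ Hp _ Hd) => [h|[h|[h|h]]].
- lia.
- by apply/orP; left; apply/eqP; lia.
- by apply/orP; right; apply/eqP; lia.
- lia.
Qed.

Lemma odd_bridge (n : Z) : Z.le Z0 n -> Z.odd n = true -> odd (Z.to_nat n).
Proof.
move=> n0 Ho; destruct (proj1 (Z.odd_spec n) Ho) as [u Hu].
have -> : Z.to_nat n = (2 * Z.to_nat u + 1)%N by lia.
by rewrite oddD oddM.
Qed.

Local Open Scope R_scope.

Theorem corollary6 (n : Z) (k1 k2 : Z) :
  Znumtheory.prime n -> Z.odd n = true ->
  sin (IZR k2 * PI / IZR n) <> 0 ->
  let r := sin (IZR k1 * PI / IZR n) / sin (IZR k2 * PI / IZR n) in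
  r = -1 \/ r = 0 \/ r = 1 \/ ~ is_rational r.
Proof.
intros Hp Ho Hs2 r.
have H2 := Znumtheory.prime_ge_2 _ Hp.
have n0 : Z.lt Z0 n by lia.
set N := Z.to_nat n.
have pN := prime_bridge Hp.
have oN := odd_bridge (Z.lt_le_incl _ _ n0) Ho.
destruct (decomp n k1 n0 Ho) as [j1 [Hj1 E1]].
destruct (decomp n k2 n0 Ho) as [j2 [Hj2 E2]].
fold N in Hj1, Hj2, E1, E2.
set s1 := sin (IZR k1 * PI / IZR n) in E1 r *.
set s2 := sin (IZR k2 * PI / IZR n) in E2 Hs2 r *.
set S1 := sin (INR j1 * theta N) in E1 *.
set S2 := sin (INR j2 * theta N) in E2 *.
destruct (Classical_Prop.classic (is_rational r)) as [[P [Q [HQ Hr]]] | Hnr];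
  last by right; right; right.
case: (Nat.eq_dec j1 0) => [Hj10|Hj10].
  have : S1 = 0 by rewrite /S1 Hj10 /= Rmult_0_l sin_0.
  move=> HS1; right; left; rewrite /r.
  have -> : s1 = 0 by case: E1 => ->; rewrite HS1 //; rewrite Ropp_0.
  by rewrite /Rdiv Rmult_0_l.
case: (Nat.eq_dec j2 0) => [Hj20|Hj20].
  exfalso; apply Hs2; have HS2 : S2 = 0 by rewrite /S2 Hj20 /= Rmult_0_l sin_0.
  by case: E2 => ->; rewrite HS2 //; rewrite Ropp_0.
have HQs : IZR Q * s1 = IZR P * s2 by apply F1 => //; apply not_0_IZR.
have [A [B [HA HAB]]] : exists A B : Z, A <> Z0 /\ IZR A * S1 = IZR B * S2.
  case: E1 => e1; case: E2 => e2; rewrite e1 e2 in HQs.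
  - by exists Q, P.
  - exists Q, (Z.opp P); split => //; rewrite opp_IZR; lra.
  - exists (Z.opp Q), P; split; [lia|]; rewrite opp_IZR; lra.
  - exists (Z.opp Q), (Z.opp P); split; [lia|]; rewrite !opp_IZR; lra.
have HAB' : ((zint A)%:~R * sin (INR j1 * theta N) = (zint B)%:~R * sin (INR j2 * theta N))%R.
  by rewrite -!IZR_zint.
have j1N : (0 < j1 < N)%N by apply/andP; split; apply/ssrnat.ltP; lia.
have j2N : (0 < j2 < N)%N by apply/andP; split; apply/ssrnat.ltP; lia.
have Hj := K pN oN j1N j2N (zint_neq0 HA) HAB'.
have HS : S2 = S1 \/ S2 = - S1.
  case: Hj => Hj; [left; by rewrite /S2 Hj | right].
  rewrite /S2 Hj theta_sub; [by rewrite sin_2pi_minus | lia | lia].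
have Hs : s1 = s2 \/ s1 = - s2 by lra.
case: Hs => Hs.
  by right; right; left; apply F2.
by left; apply F3.
Qed.
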